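(* Let $\theta\in(0,\pi)$. Then for all $x,y\in S_\theta$, $$\frac{p_{S_\theta}(x,y)}{\sqrt2\cos(\theta/4)}\le s_{S_\theta}(x,y),$$ and the constant is sharp.
   Context: $S_\theta=\{x\in\mathbb{C}:0<\arg(x)<\theta\}$. For a domain $G\subsetneq\mathbb{C}$, $d_G(x)=\inf\{|x-z|:z\in\partial G\}$, $s_G(x,y)=\frac{|x-y|}{\inf_{z\in\partial G}(|x-z|+|z-y|)}$, $p_G(x,y)=\frac{|x-y|}{\sqrt{|x-y|^2+4d_G(x)d_G(y)}}$. *)

(* Defs.v *)
From Stdlib Require Import Reals.
From Coquelicot Require Import Coquelicot.
Open Scope R_scope.

(* S_theta = { x in C : 0 < arg x < theta }, written via polar form:
   x = r e^{it} with r > 0 and 0 < t < theta (for 0 < theta < pi this is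
   exactly the set of nonzero x whose principal argument lies in (0,theta)). *)
Definition sector (theta : R) (x : C) : Prop :=
  exists r t : R, 0 < r /\ 0 < t < theta /\ x = (r * cos t, r * sin t)%R.

Definition boundary (G : C -> Prop) (z : C) : Prop :=
  forall eps : R, 0 < eps ->
    (exists w, G w /\ Cmod (w - z) < eps) /\
    (exists w, ~ G w /\ Cmod (w - z) < eps).

Definition dist_bd (G : C -> Prop) (x : C) : R :=
  real (Glb_Rbar (fun r => exists z, boundary G z /\ r = Cmod (x - z))).

Definition s_metric (G : C -> Prop) (x y : C) : R :=
  Cmod (x - y) /
  real (Glb_Rbar (fun r => exists z, boundary G z /\ r = Cmod (x - z) + Cmod (z - y))).

Definition p_metric (G : C -> Prop) (x y : C) : R :=
  Cmod (x - y) / sqrt (Cmod (x - y) ^ 2 + 4 * dist_bd G x * dist_bd G y).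

(* Main.v *)
Require Import Defs.
From Stdlib Require Import Reals Lra Psatz.
From Coquelicot Require Import Coquelicot.
Open Scope R_scope.

Lemma Cmod_diff (x y : C) :
  Cmod (x - y) = sqrt ((fst x - fst y)^2 + (snd x - snd y)^2).
Proof. unfold Cmod, Cminus, Cplus, Copp; simpl. f_equal; ring. Qed.

Lemma Cmod_ge0' (x y : C) : 0 <= Cmod (x - y).
Proof. rewrite Cmod_diff; apply sqrt_pos. Qed.

Lemma Cmod_sym (x y : C) : Cmod (x - y) = Cmod (y - x).
Proof. rewrite !Cmod_diff; f_equal; ring. Qed.

Lemma Cmod_tri (x y z : C) : Cmod (x - z) <= Cmod (x - y) + Cmod (y - z).
Proof.
  replace (x - z)%C with ((x - y) + (y - z))%C.
  - apply Cmod_triangle.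
  - destruct x, y, z; unfold Cminus, Cplus, Copp; simpl; f_equal; ring.
Qed.

Lemma abs_le_sqrt (X Y : R) : X ^ 2 <= Y -> Rabs X <= sqrt Y.
Proof.
  intros H. rewrite <- (sqrt_pow2 (Rabs X)) by apply Rabs_pos.
  apply sqrt_le_1_alt. rewrite pow2_abs. exact H.
Qed.

Lemma sqrt_sq_eq (a Y : R) : 0 <= a -> Y = a ^ 2 -> sqrt Y = a.
Proof. intros Ha ->. apply sqrt_pow2, Ha. Qed.

Definition Lf (th : R) (w : C) : R := fst w * sin th - snd w * cos th.

Definition rho (th : R) (w : C) : C :=
  (cos th * fst w + sin th * snd w, sin th * fst w - cos th * snd w).

Lemma pyth (a : R) : sin a ^ 2 + cos a ^ 2 = 1.
Proof. pose proof (sin2_cos2 a). unfold Rsqr in H. lra. Qed.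

Lemma coord_bounds (th : R) (u v : C) :
  Rabs (fst u - fst v) <= Cmod (u - v) /\
  Rabs (snd u - snd v) <= Cmod (u - v) /\
  Rabs (Lf th u - Lf th v) <= Cmod (u - v).
Proof.
  rewrite Cmod_diff. unfold Lf.
  set (a := fst u - fst v). set (b := snd u - snd v).
  pose proof (pyth th).
  split; [|split]; apply abs_le_sqrt.
  - nra.
  - nra.
  - replace (fst u * sin th - snd u * cos th - (fst v * sin th - snd v * cos th))
      with (a * sin th - b * cos th) by (unfold a, b; ring).
    assert (E : (a * sin th - b * cos th)^2 + (a * cos th + b * sin th)^2
               = (a^2 + b^2) * (sin th ^2 + cos th ^2)) by ring.
    rewrite H in E. pose proof (pow2_ge_0 (a * cos th + b * sin th)). lra.
Qed.

Lemma glb_bounds (E : R -> Prop) (m e : R) :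
  E e -> (forall r, E r -> m <= r) ->
  m <= real (Glb_Rbar E) /\ real (Glb_Rbar E) <= e.
Proof.
  intros He Hm.
  destruct (Glb_Rbar_correct E) as [Hlb Hgr].
  specialize (Hlb e He).
  assert (Hm' : Rbar_le m (Glb_Rbar E)).
  { apply Hgr. intros r Hr. simpl. apply Hm, Hr. }
  destruct (Glb_Rbar E); simpl in *; try contradiction; split; assumption.
Qed.

Lemma rho_snd th w : snd (rho th w) = Lf th w.
Proof. unfold rho, Lf; simpl; ring. Qed.

Lemma rho_Lf th w : Lf th (rho th w) = snd w.
Proof.
  unfold rho, Lf; simpl. pose proof (pyth th).
  transitivity (snd w * (sin th ^ 2 + cos th ^ 2)); [ring|]. rewrite H; ring.
Qed.

Lemma rho_rho th w : rho th (rho th w) = w.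
Proof.
  destruct w as [a b]. unfold rho; simpl. pose proof (pyth th).
  f_equal.
  - transitivity (a * (sin th ^ 2 + cos th ^ 2)); [ring|]. rewrite H; ring.
  - transitivity (b * (sin th ^ 2 + cos th ^ 2)); [ring|]. rewrite H; ring.
Qed.

Lemma rho_Cmod th u v : Cmod (rho th u - rho th v) = Cmod (u - v).
Proof.
  rewrite !Cmod_diff. unfold rho; simpl. f_equal. pose proof (pyth th).
  set (a := fst u - fst v). set (b := snd u - snd v).
  transitivity ((a^2 + b^2) * (sin th ^ 2 + cos th ^ 2)).
  - unfold a, b; ring.
  - rewrite H; ring.
Qed.

Definition polar (r a : R) : C := (r * cos a, r * sin a).

Lemma rho_polar th r a : rho th (polar r a) = polar r (th - a).
Proof.
  unfold rho, polar; simpl. rewrite cos_minus, sin_minus. f_equal; ring.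
Qed.

Lemma polar_snd r a : snd (polar r a) = r * sin a.
Proof. reflexivity. Qed.

Lemma polar_Lf th r a : Lf th (polar r a) = r * sin (th - a).
Proof. unfold Lf, polar; simpl. rewrite sin_minus. ring. Qed.

Lemma sector_iff th (Hth : 0 < th < PI) w :
  sector th w <-> 0 < snd w /\ 0 < Lf th w.
Proof.
  split.
  - intros (r & t & Hr & Ht & ->). fold (polar r t).
    rewrite polar_snd, polar_Lf. split.
    + apply Rmult_lt_0_compat; [lra|]. apply sin_gt_0; lra.
    + apply Rmult_lt_0_compat; [lra|]. apply sin_gt_0; lra.
  - destruct w as [a b]. unfold Lf; simpl. intros [Hb HL].
    set (r := sqrt (a ^ 2 + b ^ 2)).
    assert (Hr2 : r ^ 2 = a ^ 2 + b ^ 2) by (unfold r; apply pow2_sqrt; nra).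
    assert (Hr : 0 < r) by (unfold r; apply sqrt_lt_R0; nra).
    assert (Har : -1 < a / r < 1).
    { split.
      - apply (Rmult_lt_reg_r r); [lra|]. field_simplify; [|lra]. nra.
      - apply (Rmult_lt_reg_r r); [lra|]. field_simplify; [|lra]. nra. }
    set (t := acos (a / r)).
    assert (Hc : cos t = a / r) by (apply cos_acos; lra).
    assert (Hs : sin t = b / r).
    { unfold t. rewrite sin_acos by lra. apply sqrt_sq_eq.
      - apply Rlt_le, Rdiv_lt_0_compat; lra.
      - unfold Rsqr. replace (1 - a / r * (a / r)) with ((r^2 - a^2)/r^2) by (field; lra).
        replace (r^2 - a^2) with (b^2) by lra. field. lra. }
    assert (Ht : 0 < t < PI) by (apply acos_bound_lt; lra).
    exists r, t. split; [exact Hr|]. split.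
    + split; [lra|].
      destruct (Rlt_or_le t th) as [H|H]; [exact H|exfalso].
      assert (Hsin : sin (th - t) <= 0).
      { destruct (Req_dec t th) as [E|E].
        - rewrite E, Rminus_diag, sin_0; lra.
        - left. apply sin_lt_0_var; lra. }
      rewrite sin_minus, Hc, Hs in Hsin.
      assert (E : sin th * (a / r) - cos th * (b / r) = (a * sin th - b * cos th) / r)
        by (field; lra).
      rewrite E in Hsin.
      assert (0 < (a * sin th - b * cos th) / r) by (apply Rdiv_lt_0_compat; lra).
      lra.
    + rewrite Hc, Hs. f_equal; field; lra.
Qed.

Lemma sector_rho th (Hth : 0 < th < PI) w : sector th (rho th w) <-> sector th w.
Proof.
  rewrite !sector_iff by exact Hth. rewrite rho_snd, rho_Lf. tauto.
Qed.

Lemma boundary_rho th (Hth : 0 < th < PI) z :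
  boundary (sector th) z -> boundary (sector th) (rho th z).
Proof.
  intros Hb eps He. destruct (Hb eps He) as [[w1 [H1 H1']] [w2 [H2 H2']]].
  split.
  - exists (rho th w1). rewrite sector_rho, rho_Cmod by exact Hth. tauto.
  - exists (rho th w2). rewrite sector_rho, rho_Cmod by exact Hth. tauto.
Qed.

Lemma bd_not_in th (Hth : 0 < th < PI) z :
  boundary (sector th) z -> ~ (0 < snd z /\ 0 < Lf th z).
Proof.
  intros Hb [H1 H2].
  set (eps := Rmin (snd z) (Lf th z)).
  assert (He : 0 < eps) by (apply Rmin_glb_lt; lra).
  destruct (Hb eps He) as [_ [w [Hw Hd]]].
  apply Hw. apply sector_iff; [exact Hth|].
  destruct (coord_bounds th w z) as (_ & Hs & HL).
  pose proof (Rmin_l (snd z) (Lf th z)). pose proof (Rmin_r (snd z) (Lf th z)).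
  fold eps in H, H0.
  apply Rabs_le_between' in Hs. apply Rabs_le_between' in HL. lra.
Qed.

Lemma bd_closure th (Hth : 0 < th < PI) z :
  boundary (sector th) z -> 0 <= snd z /\ 0 <= Lf th z.
Proof.
  intros Hb. split.
  - destruct (Rle_or_lt 0 (snd z)) as [H|H]; [exact H|exfalso].
    destruct (Hb (- snd z)) as [[w [Hw Hd]] _]; [lra|].
    apply sector_iff in Hw; [|exact Hth].
    destruct (coord_bounds th w z) as (_ & Hs & _).
    apply Rabs_le_between' in Hs. lra.
  - destruct (Rle_or_lt 0 (Lf th z)) as [H|H]; [exact H|exfalso].
    destruct (Hb (- Lf th z)) as [[w [Hw Hd]] _]; [lra|].
    apply sector_iff in Hw; [|exact Hth].
    destruct (coord_bounds th w z) as (_ & _ & HL).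
    apply Rabs_le_between' in HL. lra.
Qed.

Lemma bd_real th (Hth : 0 < th < PI) s : 0 <= s -> boundary (sector th) (s, 0).
Proof.
  intros Hs eps He. set (d := eps / 2).
  assert (Hd : 0 < d) by (unfold d; lra).
  assert (Hs2 : 0 < sin (th / 2)) by (apply sin_gt_0; lra).
  assert (Hsth : 0 < sin th) by (apply sin_gt_0; lra).
  split.
  - exists (s + d * cos (th / 2), d * sin (th / 2)). split.
    + apply sector_iff; [exact Hth|]. unfold Lf; simpl. split.
      * apply Rmult_lt_0_compat; lra.
      * replace ((s + d * cos (th / 2)) * sin th - d * sin (th / 2) * cos th)
          with (s * sin th + d * sin (th - th / 2)) by (rewrite sin_minus; ring).
        replace (th - th / 2) with (th / 2) by field.
        nra.
    + rewrite Cmod_diff; cbn [fst snd].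
      assert (E : sqrt ((s + d * cos (th / 2) - s) ^ 2 + (d * sin (th / 2) - 0) ^ 2) = d).
      { apply sqrt_sq_eq; [lra|].
        pose proof (pyth (th / 2)).
        transitivity (d ^ 2 * (sin (th / 2) ^ 2 + cos (th / 2) ^ 2)); [ring|].
        rewrite H; ring. }
      rewrite E. unfold d; lra.
  - exists (s, - d). split.
    + rewrite sector_iff by exact Hth. simpl. lra.
    + rewrite Cmod_diff; cbn [fst snd].
      assert (E : sqrt ((s - s) ^ 2 + (- d - 0) ^ 2) = d) by (apply sqrt_sq_eq; [lra|ring]).
      rewrite E. unfold d; lra.
Qed.

Lemma bd_theta th (Hth : 0 < th < PI) s : 0 <= s ->
  boundary (sector th) (rho th (s, 0)).
Proof. intros Hs. apply boundary_rho; [exact Hth|]. apply bd_real; assumption. Qed.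

Definition mm th (w : C) := Rmin (snd w) (Lf th w).

Lemma dist_lower th (Hth : 0 < th < PI) x z :
  boundary (sector th) z -> mm th x <= Cmod (x - z).
Proof.
  intros Hb. pose proof (bd_not_in th Hth z Hb).
  destruct (coord_bounds th x z) as (_ & Hs & HL).
  apply Rabs_le_between' in Hs. apply Rabs_le_between' in HL.
  unfold mm. pose proof (Rmin_l (snd x) (Lf th x)). pose proof (Rmin_r (snd x) (Lf th x)).
  destruct (Rle_or_lt (snd z) 0); [lra|].
  destruct (Rle_or_lt (Lf th z) 0); [lra|]. exfalso; tauto.
Qed.

Lemma dist_bd_bounds th (Hth : 0 < th < PI) x z0 :
  boundary (sector th) z0 ->
  mm th x <= dist_bd (sector th) x /\ dist_bd (sector th) x <= Cmod (x - z0).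
Proof.
  intros Hz0. unfold dist_bd. apply glb_bounds.
  - exists z0. split; [exact Hz0|reflexivity].
  - intros r [z [Hz ->]]. apply dist_lower; assumption.
Qed.

Lemma mm_pos th (Hth : 0 < th < PI) x : sector th x -> 0 < mm th x.
Proof.
  intros Hx. apply sector_iff in Hx; [|exact Hth]. unfold mm. apply Rmin_glb_lt; lra.
Qed.

Lemma mm_rho th x : mm th (rho th x) = mm th x.
Proof. unfold mm. rewrite rho_snd, rho_Lf. apply Rmin_comm. Qed.

Lemma sqrt_scale (l Q : R) : 0 <= l -> sqrt (l ^ 2 * Q) = l * sqrt Q.
Proof.
  intros Hl. rewrite sqrt_mult_alt by (apply pow2_ge_0). rewrite sqrt_pow2 by exact Hl. reflexivity.
Qed.

Lemma ray_value (x y : C) : 0 < snd x -> 0 < snd y ->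
  Cmod (x - ((fst x * snd y + fst y * snd x) / (snd x + snd y), 0))
  + Cmod (((fst x * snd y + fst y * snd x) / (snd x + snd y), 0) - y)
  = sqrt ((fst x - fst y) ^ 2 + (snd x + snd y) ^ 2).
Proof.
  intros Hx Hy. destruct x as [x1 x2], y as [y1 y2]. cbn [fst snd] in *.
  rewrite !Cmod_diff. cbn [fst snd].
  assert (Hh : x2 + y2 <> 0) by lra.
  replace ((x1 - (x1 * y2 + y1 * x2) / (x2 + y2)) ^ 2 + (x2 - 0) ^ 2)
    with ((x2 / (x2 + y2)) ^ 2 * ((x1 - y1) ^ 2 + (x2 + y2) ^ 2))
    by (field; exact Hh).
  replace (((x1 * y2 + y1 * x2) / (x2 + y2) - y1) ^ 2 + (0 - y2) ^ 2)
    with ((y2 / (x2 + y2)) ^ 2 * ((x1 - y1) ^ 2 + (x2 + y2) ^ 2))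
    by (field; exact Hh).
  rewrite !sqrt_scale by (apply Rlt_le, Rdiv_lt_0_compat; lra).
  field. exact Hh.
Qed.

Lemma refl_lower (x y z : C) : snd z = 0 ->
  sqrt ((fst x - fst y) ^ 2 + (snd x + snd y) ^ 2) <= Cmod (x - z) + Cmod (z - y).
Proof.
  intros Hz.
  set (yb := (fst y, - snd y)).
  assert (E1 : Cmod (z - y) = Cmod (z - yb)).
  { rewrite !Cmod_diff. unfold yb; cbn [fst snd]. rewrite Hz. f_equal; ring. }
  assert (E2 : Cmod (x - yb) = sqrt ((fst x - fst y) ^ 2 + (snd x + snd y) ^ 2)).
  { rewrite !Cmod_diff. unfold yb; cbn [fst snd]. f_equal; ring. }
  rewrite E1, <- E2. apply Cmod_tri.
Qed.

Lemma Cmod_sq (x y : C) : Cmod (x - y) ^ 2 = (fst x - fst y) ^ 2 + (snd x - snd y) ^ 2.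
Proof. rewrite Cmod_diff. apply pow2_sqrt. apply Rplus_le_le_0_compat; apply pow2_ge_0. Qed.

Definition K th := sqrt 2 * cos (th / 4).

Lemma K_props th : 0 < th < PI -> 0 < K th /\ K th ^ 2 = 1 + cos (th / 2).
Proof.
  intros Hth. unfold K. split.
  - apply Rmult_lt_0_compat; [apply sqrt_lt_R0; lra|].
    apply cos_gt_0; lra.
  - rewrite Rpow_mult_distr, pow2_sqrt by lra.
    replace (th / 2) with (2 * (th / 4)) by field. rewrite cos_2a_cos. ring.
Qed.

Lemma K_ge1 th : 0 < th < PI -> 1 <= K th.
Proof.
  intros Hth. destruct (K_props th Hth) as [H1 H2].
  assert (0 < cos (th / 2)) by (apply cos_gt_0; lra). nra.
Qed.

Definition Good th (x y : C) := exists z, boundary (sector th) z /\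
  Cmod (x - z) + Cmod (z - y) <= K th * sqrt (Cmod (x - y) ^ 2 + 4 * mm th x * mm th y).

Lemma ray_step th (Hth : 0 < th < PI) x y :
  sector th x -> sector th y ->
  0 <= fst x * snd y + fst y * snd x ->
  Cmod (x - y) ^ 2 + 4 * snd x * snd y
    <= K th ^ 2 * (Cmod (x - y) ^ 2 + 4 * mm th x * mm th y) ->
  Good th x y.
Proof.
  intros Hx Hy Hc Hineq.
  pose proof (mm_pos th Hth x Hx). pose proof (mm_pos th Hth y Hy).
  apply sector_iff in Hx; [|exact Hth]. apply sector_iff in Hy; [|exact Hth].
  exists ((fst x * snd y + fst y * snd x) / (snd x + snd y), 0). split.
  - apply bd_real; [exact Hth|]. apply Rmult_le_pos; [exact Hc|].
    apply Rlt_le, Rinv_0_lt_compat. lra.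
  - rewrite ray_value by tauto.
    destruct (K_props th Hth) as [HK _].
    rewrite <- (sqrt_pow2 (K th)) by lra. rewrite <- sqrt_mult_alt by nra.
    apply sqrt_le_1_alt. rewrite Cmod_sq in *. nra.
Qed.

Lemma msplit th a : 0 < th < PI -> 0 < a -> a <= th / 2 -> sin a <= sin (th - a).
Proof.
  intros Hth Ha Hle.
  assert (E : sin (th - a) - sin a = 2 * cos (th / 2) * sin (th / 2 - a)).
  { assert (G : forall u v, sin (u + v) - sin (u - v) = 2 * cos u * sin v)
      by (intros; rewrite sin_plus, sin_minus; ring).
    rewrite <- G. f_equal; f_equal; field. }
  assert (0 < cos (th / 2)) by (apply cos_gt_0; lra).
  assert (0 <= sin (th / 2 - a)) by (apply sin_ge_0; lra).
  nra.
Qed.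

Lemma polar_sector th r a : 0 < r -> 0 < a < th -> sector th (polar r a).
Proof. intros. exists r, a. unfold polar. tauto. Qed.

Lemma polar_dist_minus r1 r2 a b :
  (r1 * cos a - r2 * cos b) ^ 2 + (r1 * sin a - r2 * sin b) ^ 2
  = r1 ^ 2 + r2 ^ 2 - 2 * r1 * r2 * cos (a - b).
Proof.
  rewrite cos_minus. pose proof (pyth a). pose proof (pyth b).
  transitivity (r1 ^ 2 * (sin a ^ 2 + cos a ^ 2) + r2 ^ 2 * (sin b ^ 2 + cos b ^ 2)
                - 2 * r1 * r2 * (cos a * cos b + sin a * sin b)); [ring|].
  rewrite H, H0. ring.
Qed.

Lemma mm_polar_left th r a : 0 < th < PI -> 0 < r -> 0 < a -> a <= th / 2 ->
  mm th (polar r a) = r * sin a.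
Proof.
  intros. unfold mm. rewrite polar_snd, polar_Lf. apply Rmin_left.
  apply Rmult_le_compat_l; [lra|]. apply msplit; assumption.
Qed.

Lemma mm_polar_right th r a : 0 < th < PI -> 0 < r -> th / 2 <= a -> a < th ->
  mm th (polar r a) = r * sin (th - a).
Proof.
  intros. unfold mm. rewrite polar_snd, polar_Lf. apply Rmin_right.
  apply Rmult_le_compat_l; [lra|].
  replace a with (th - (th - a)) at 2 by ring. apply msplit; lra.
Qed.

Lemma cross_polar r1 r2 a b :
  fst (polar r1 a) * snd (polar r2 b) + fst (polar r2 b) * snd (polar r1 a)
  = r1 * r2 * sin (a + b).
Proof. unfold polar; cbn [fst snd]. rewrite sin_plus. ring. Qed.

Lemma coreA th r1 r2 a b : 0 < th < PI -> 0 < r1 -> 0 < r2 ->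
  0 < a <= th / 2 -> 0 < b <= th / 2 -> Good th (polar r1 a) (polar r2 b).
Proof.
  intros Hth H1 H2 Ha Hb.
  apply ray_step; [exact Hth|apply polar_sector; lra|apply polar_sector; lra| |].
  - rewrite cross_polar. apply Rmult_le_pos; [nra|]. apply sin_ge_0; lra.
  - rewrite (mm_polar_left th r1 a), (mm_polar_left th r2 b) by lra.
    rewrite !polar_snd.
    pose proof (K_ge1 th Hth).
    assert (0 <= Cmod (polar r1 a - polar r2 b) ^ 2) by apply pow2_ge_0.
    assert (0 < sin a) by (apply sin_gt_0; lra).
    assert (0 < sin b) by (apply sin_gt_0; lra).
    assert (0 <= r1 * sin a * (r2 * sin b)) by (apply Rmult_le_pos; apply Rmult_le_pos; lra).
    assert (1 <= K th ^ 2) by nra.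
    nra.
Qed.

Lemma g_nonneg th a b : 0 < th < PI -> 0 < a -> th / 2 <= b -> a + b <= th ->
  0 <= cos (th / 2) + cos (a + b) + (1 + cos (th / 2)) * (cos (a + b - th) - 2 * cos (th / 2)).
Proof.
  intros Hth Ha Hb Hab.
  set (T := th / 2). set (t := (th - a - b) / 2).
  replace (a + b) with (2 * (T - t)) by (unfold T, t; field).
  replace (2 * (T - t) - th) with (- (2 * t)) by (unfold T, t; field).
  rewrite cos_neg.
  assert (E : cos T + cos (2 * (T - t)) + (1 + cos T) * (cos (2 * t) - 2 * cos T)
              = 2 * cos T * sin t * (2 * sin (T - t) - sin t)).
  { rewrite !cos_2a_sin. rewrite sin_minus.
    pose proof (pyth T). pose proof (pyth t).
    apply Rminus_diag_uniq.
    transitivity (-2 * sin T ^ 2 * (sin t ^ 2 + cos t ^ 2 - 1)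
                  + 2 * (sin t ^ 2 - 1) * (sin T ^ 2 + cos T ^ 2 - 1)); [ring|].
    rewrite H, H0. ring. }
  rewrite E.
  assert (HT : 0 < cos T) by (apply cos_gt_0; unfold T; lra).
  assert (Ht : 0 <= sin t) by (apply sin_ge_0; unfold t, T in *; lra).
  assert (Hm : sin t <= sin (T - t)) by (apply sin_incr_1; unfold t, T in *; lra).
  apply Rmult_le_pos; [apply Rmult_le_pos; lra|lra].
Qed.

Lemma coreB th r1 r2 a b : 0 < th < PI -> 0 < r1 -> 0 < r2 ->
  0 < a <= th / 2 -> th / 2 <= b < th -> a <= th - b ->
  Good th (polar r1 a) (polar r2 b).
Proof.
  intros Hth H1 H2 Ha Hb Hab.
  apply ray_step; [exact Hth|apply polar_sector; lra|apply polar_sector; lra| |].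
  - rewrite cross_polar. apply Rmult_le_pos; [nra|]. apply sin_ge_0; lra.
  - rewrite (mm_polar_left th r1 a), (mm_polar_right th r2 b) by lra.
    rewrite !polar_snd, Cmod_sq. unfold polar; cbn [fst snd].
    rewrite polar_dist_minus.
    destruct (K_props th Hth) as [HK HK2]. rewrite HK2.
    pose proof (g_nonneg th a b Hth (proj1 Ha) (proj1 Hb) ltac:(lra)) as Hg.
    set (T := th / 2) in *.
    assert (F1 : cos (a - b) - cos (a + b) = 2 * sin a * sin b)
      by (rewrite cos_minus, cos_plus; ring).
    assert (F2 : 2 * sin a * sin (th - b) = cos (a + b - th) - cos (a - b + th)).
    { replace (a + b - th) with (a - (th - b)) by ring.
      replace (a - b + th) with (a + (th - b)) by ring.
      rewrite cos_minus, cos_plus. ring. }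
    assert (F3 : cos (a - b) + cos (a - b + th) = 2 * cos T * cos (a - b + T)).
    { assert (G : forall u v, cos (u - v) + cos (u + v) = 2 * cos v * cos u)
        by (intros; rewrite cos_minus, cos_plus; ring).
      rewrite <- G. f_equal; f_equal; unfold T; field. }
    assert (HT : 0 < cos T) by (apply cos_gt_0; unfold T; lra).
    pose proof (COS_bound (a - b + T)) as Hw.
    set (c := r1 * r2).
    replace (4 * (r1 * sin a) * (r2 * sin b)) with (2 * c * (cos (a - b) - cos (a + b)))
      by (rewrite F1; unfold c; ring).
    replace (4 * (r1 * sin a) * (r2 * sin (th - b)))
      with (2 * c * (cos (a + b - th) - cos (a - b + th))) by (rewrite <- F2; unfold c; ring).
    replace (cos (a - b + th)) with (2 * cos T * cos (a - b + T) - cos (a - b)) by lra.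
    replace (2 * r1 * r2) with (2 * c) by (unfold c; ring).
    assert (Hc : 0 < c) by (unfold c; nra).
    assert (P1 : 0 <= c * (cos T + cos (a + b) + (1 + cos T) * (cos (a + b - th) - 2 * cos T)))
      by (apply Rmult_le_pos; lra).
    assert (P2 : 0 <= c * (1 + cos T) * cos T * (1 - cos (a - b + T)))
      by (repeat apply Rmult_le_pos; lra).
    assert (P3 : 0 <= cos T * (r1 - r2) ^ 2) by (apply Rmult_le_pos; [lra|apply pow2_ge_0]).
    assert (P4 : c = r1 * r2) by reflexivity.
    nra.
Qed.

Lemma Good_swap th x y : Good th x y -> Good th y x.
Proof.
  intros [z [Hz Hv]]. exists z. split; [exact Hz|].
  rewrite (Cmod_sym y z), (Cmod_sym z x), (Cmod_sym y x).
  replace (4 * mm th y * mm th x) with (4 * mm th x * mm th y) by ring. lra.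
Qed.

Lemma Good_rho th (Hth : 0 < th < PI) x y : Good th (rho th x) (rho th y) -> Good th x y.
Proof.
  intros [z [Hz Hv]]. exists (rho th z). split; [apply boundary_rho; assumption|].
  rewrite !mm_rho, rho_Cmod in Hv.
  assert (E1 : Cmod (x - rho th z) = Cmod (rho th x - z))
    by (rewrite <- (rho_Cmod th (rho th x) z), rho_rho; reflexivity).
  assert (E2 : Cmod (rho th z - y) = Cmod (z - rho th y))
    by (rewrite <- (rho_Cmod th z (rho th y)), rho_rho; reflexivity).
  rewrite E1, E2. exact Hv.
Qed.

Lemma mixed th r1 r2 a b : 0 < th < PI -> 0 < r1 -> 0 < r2 ->
  0 < a <= th / 2 -> th / 2 <= b < th -> Good th (polar r1 a) (polar r2 b).
Proof.
  intros Hth H1 H2 Ha Hb.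
  destruct (Rle_or_lt a (th - b)) as [H|H].
  - apply coreB; assumption.
  - apply Good_rho; [exact Hth|]. rewrite !rho_polar. apply Good_swap.
    apply coreB; lra.
Qed.

Lemma Good_all th (Hth : 0 < th < PI) x y : sector th x -> sector th y -> Good th x y.
Proof.
  intros (r1 & a & Hr1 & Ha & ->) (r2 & b & Hr2 & Hb & ->).
  fold (polar r1 a). fold (polar r2 b).
  destruct (Rle_or_lt a (th / 2)) as [Ha2|Ha2]; destruct (Rle_or_lt b (th / 2)) as [Hb2|Hb2].
  - apply coreA; lra.
  - apply mixed; lra.
  - apply Good_swap, mixed; lra.
  - apply Good_rho; [exact Hth|]. rewrite !rho_polar. apply coreA; lra.
Qed.

Lemma final_ineq D K0 mx my dx dy I :
  0 <= D -> 0 < K0 -> mx <= dx -> my <= dy -> 0 < mx -> 0 < my -> D <= I ->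
  I <= K0 * sqrt (D ^ 2 + 4 * mx * my) ->
  D / sqrt (D ^ 2 + 4 * dx * dy) / K0 <= D / I.
Proof.
  intros HD HK Hx Hy Hmx Hmy HI1 HI2.
  destruct (Req_dec D 0) as [E|E].
  - subst D. unfold Rdiv. rewrite !Rmult_0_l. lra.
  - assert (HI : 0 < I) by lra.
    assert (HS0 : sqrt (D ^ 2 + 4 * mx * my) <= sqrt (D ^ 2 + 4 * dx * dy))
      by (apply sqrt_le_1_alt; nra).
    assert (HS : 0 < sqrt (D ^ 2 + 4 * dx * dy)) by (apply sqrt_lt_R0; nra).
    unfold Rdiv. rewrite Rmult_assoc, <- Rinv_mult.
    apply Rmult_le_compat_l; [lra|]. apply Rinv_le_contravar; [lra|]. nra.
Qed.

Lemma part1 th (Hth : 0 < th < PI) x y : sector th x -> sector th y ->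
  p_metric (sector th) x y / (sqrt 2 * cos (th / 4)) <= s_metric (sector th) x y.
Proof.
  intros Hx Hy.
  destruct (Good_all th Hth x y Hx Hy) as [z [Hz Hv]].
  destruct (dist_bd_bounds th Hth x z Hz) as [Hdx _].
  destruct (dist_bd_bounds th Hth y z Hz) as [Hdy _].
  assert (HI : Cmod (x - y) <= real (Glb_Rbar (fun r => exists z, boundary (sector th) z /\
                      r = Cmod (x - z) + Cmod (z - y)))
               <= Cmod (x - z) + Cmod (z - y)).
  { apply glb_bounds.
    - exists z. split; [exact Hz|reflexivity].
    - intros r [z' [_ ->]]. apply Cmod_tri. }
  unfold p_metric, s_metric.
  fold (K th).
  destruct (K_props th Hth) as [HK _].
  apply (final_ineq _ _ (mm th x) (mm th y)); try tauto.
  - apply Cmod_ge0'.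
  - apply mm_pos; assumption.
  - apply mm_pos; assumption.
  - lra.
Qed.

Lemma polar_dist_plus r1 r2 a b :
  (r1 * cos a - r2 * cos b) ^ 2 + (r1 * sin a + r2 * sin b) ^ 2
  = r1 ^ 2 + r2 ^ 2 - 2 * r1 * r2 * cos (a + b).
Proof.
  rewrite cos_plus. pose proof (pyth a). pose proof (pyth b).
  transitivity (r1 ^ 2 * (sin a ^ 2 + cos a ^ 2) + r2 ^ 2 * (sin b ^ 2 + cos b ^ 2)
                - 2 * r1 * r2 * (cos a * cos b - sin a * sin b)); [ring|].
  rewrite H, H0. ring.
Qed.

Lemma part2 th (Hth : 0 < th < PI) k : 0 < k < sqrt 2 * cos (th / 4) ->
  exists x y : C, sector th x /\ sector th y /\
    s_metric (sector th) x y < p_metric (sector th) x y / k.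
Proof.
  intros [Hk0 HkK]. fold (K th) in HkK.
  set (a := th / 4).
  set (x := polar 1 a). set (y := polar 1 (th - a)).
  assert (Hrx : rho th x = y) by (unfold x, y; apply rho_polar).
  assert (Hry : rho th y = x)
    by (unfold x, y; rewrite rho_polar; f_equal; ring).
  assert (Hx : sector th x) by (apply polar_sector; unfold a; lra).
  assert (Hy : sector th y) by (apply polar_sector; unfold a; lra).
  exists x, y. split; [exact Hx|]. split; [exact Hy|].
  assert (Hsa : 0 < sin a) by (apply sin_gt_0; unfold a; lra).
  assert (Hca : 0 < cos a) by (apply cos_gt_0; unfold a; lra).
  set (z0 := (cos a, 0)).
  assert (Hz0 : boundary (sector th) z0) by (apply bd_real; lra).
  assert (Hxz0 : Cmod (x - z0) = sin a).
  { rewrite Cmod_diff. unfold x, z0, polar; cbn [fst snd]. apply sqrt_sq_eq; [lra|ring]. }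
  assert (Hyz0 : Cmod (y - rho th z0) = sin a)
    by (rewrite <- Hrx, rho_Cmod; exact Hxz0).
  destruct (dist_bd_bounds th Hth x z0 Hz0) as [Hdx1 Hdx2].
  destruct (dist_bd_bounds th Hth y (rho th z0) (boundary_rho th Hth z0 Hz0)) as [Hdy1 Hdy2].
  pose proof (mm_pos th Hth x Hx). pose proof (mm_pos th Hth y Hy).
  rewrite Hxz0 in Hdx2. rewrite Hyz0 in Hdy2.
  set (M := sqrt ((fst x - fst y) ^ 2 + (snd x + snd y) ^ 2)).
  assert (HI : M <= real (Glb_Rbar (fun r => exists z, boundary (sector th) z /\
                      r = Cmod (x - z) + Cmod (z - y)))
               <= Cmod (x - z0) + Cmod (z0 - y)).
  { apply glb_bounds.
    - exists z0. split; [exact Hz0|reflexivity].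
    - intros r [z [Hz ->]].
      destruct (bd_closure th Hth z Hz) as [H1 H2].
      pose proof (bd_not_in th Hth z Hz) as H3.
      destruct (Req_dec (snd z) 0) as [E|E].
      + apply refl_lower. exact E.
      + assert (E' : snd (rho th z) = 0).
        { rewrite rho_snd. destruct (Req_dec (Lf th z) 0) as [E2|E2]; [exact E2|].
          exfalso. apply H3. lra. }
        pose proof (refl_lower y x (rho th z) E') as HR.
        assert (E1 : Cmod (y - rho th z) = Cmod (x - z)) by (rewrite <- Hrx; apply rho_Cmod).
        assert (E2 : Cmod (rho th z - x) = Cmod (z - y)) by (rewrite <- Hry; apply rho_Cmod).
        rewrite E1, E2 in HR. unfold M.
        replace ((fst x - fst y) ^ 2 + (snd x + snd y) ^ 2)
          with ((fst y - fst x) ^ 2 + (snd y + snd x) ^ 2) by ring.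
        exact HR. }
  unfold p_metric, s_metric.
  set (I := real (Glb_Rbar _)) in *.
  set (D := Cmod (x - y)).
  assert (HD2 : D ^ 2 = 4 * sin a ^ 2).
  { unfold D. rewrite Cmod_sq. unfold x, y, polar; cbn [fst snd].
    rewrite polar_dist_minus.
    replace (a - (th - a)) with (- (2 * a)) by (unfold a; field).
    rewrite cos_neg, cos_2a_sin. ring. }
  assert (HM2 : (fst x - fst y) ^ 2 + (snd x + snd y) ^ 2 = 16 * sin a ^ 2 * cos a ^ 2).
  { unfold x, y, polar; cbn [fst snd]. rewrite polar_dist_plus.
    replace (a + (th - a)) with (2 * (2 * a)) by (unfold a; field).
    rewrite cos_2a_sin, sin_2a. ring. }
  assert (HD0 : 0 <= D) by apply Cmod_ge0'.
  assert (HD : 0 < D) by nra.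
  set (S := sqrt (D ^ 2 + 4 * dist_bd (sector th) x * dist_bd (sector th) y)).
  set (S0 := sqrt (D ^ 2 + 4 * sin a ^ 2)).
  assert (HS : 0 < S) by (apply sqrt_lt_R0; nra).
  assert (HSS0 : S <= S0) by (apply sqrt_le_1_alt; nra).
  destruct (K_props th Hth) as [HK _].
  assert (HKS0 : M = K th * S0).
  { unfold M. apply sqrt_sq_eq.
    - apply Rmult_le_pos; [lra|apply sqrt_pos].
    - rewrite HM2, Rpow_mult_distr. unfold S0. rewrite pow2_sqrt by nra.
      rewrite HD2. unfold K. rewrite Rpow_mult_distr, pow2_sqrt by lra.
      fold a. ring. }
  assert (HkS : S * k < I).
  { assert (S * k < S * K th) by (apply Rmult_lt_compat_l; lra).
    assert (K th * S <= K th * S0) by (apply Rmult_le_compat_l; lra). lra. }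
  unfold Rdiv. rewrite Rmult_assoc, <- Rinv_mult.
  apply Rmult_lt_compat_l; [lra|]. apply Rinv_lt_contravar; [|exact HkS].
  assert (0 < S * k) by (apply Rmult_lt_0_compat; lra).
  apply Rmult_lt_0_compat; lra.
Qed.

Theorem theorem3p8 (theta : R) (Htheta : 0 < theta < PI) :
  (forall x y : C, sector theta x -> sector theta y ->
     p_metric (sector theta) x y / (sqrt 2 * cos (theta / 4))
       <= s_metric (sector theta) x y) /\
  (* sharpness: the constant sqrt 2 * cos(theta/4) cannot be decreased *)
  (forall k : R, 0 < k < sqrt 2 * cos (theta / 4) ->
     exists x y : C, sector theta x /\ sector theta y /\
       s_metric (sector theta) x y < p_metric (sector theta) x y / k).
Proof.
  split.
  - intros x y Hx Hy. apply part1; assumption.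
  - intros k Hk. apply part2; assumption.
Qed.
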